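(* Let $G$ and $H$ be finite simple graphs with $\gamma_{sR}(G)\geq 0$ and $\gamma_{sR}(H)\geq 0$. Then $\gamma_{sR}(G\vee H)\leq \gamma_{sR}(G)+\gamma_{sR}(H)$.
   Context: For a graph $G=(V,E)$ and $x\in V$, $N_G[x]=\{x\}\cup\{y: xy\in E\}$. A signed Roman dominating function (SRDF) on $G$ is a function $f:V\to\{-1,1,2\}$ such that (a) $\sum_{y\in N_G[x]}f(y)\geq 1$ for every $x\in V$, and (b) every vertex $x$ with $f(x)=-1$ is adjacent to at least one vertex $y$ with $f(y)=2$. The weight of $f$ is $\sum_{x\in V}f(x)$, and $\gamma_{sR}(G)$ is the minimum weight of an SRDF on $G$. The join $G_1\vee G_2$ of two graphs has vertex set $V(G_1)\cup V(G_2)$ (disjoint union) and edge set $E(G_1)\cup E(G_2)\cup\{uv: u\in V(G_1), v\in V(G_2)\}$. *)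

(* Defs.v *)
From mathcomp Require Import all_boot all_order all_algebra.
Set Implicit Arguments. Unset Strict Implicit. Unset Printing Implicit Defensive.
Import Order.TTheory GRing.Theory Num.Theory.
Local Open Scope ring_scope.

Definition simple_graph (T : finType) (e : rel T) : Prop :=
  symmetric e /\ irreflexive e.

Definition cnbhd (T : finType) (e : rel T) (x : T) : {set T} :=
  [set y | (y == x) || e x y].

Definition is_srdf (T : finType) (e : rel T) (f : T -> int) : bool :=
  [&& [forall x, f x \in [:: -1; 1; 2]],
      [forall x, 1 <= \sum_(y in cnbhd e x) f y] &
      [forall x, (f x == -1) ==> [exists y, e x y && (f y == 2)]]].

Definition weight (T : finType) (f : T -> int) : int := \sum_x f x.

Definition lab (i : 'I_3) : int := if val i == 0%N then -1 else (val i)%:Z.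

(* every function V -> {-1,1,2} is lab \o g for some g : {ffun T -> 'I_3} *)
Definition gammaSR (T : finType) (e : rel T) : int :=
  let g := Order.arg_min [ffun=> (@Ordinal 3 1 isT)]
             (fun g : {ffun T -> 'I_3} => is_srdf e (fun x => lab (g x)))
             (fun g : {ffun T -> 'I_3} => weight (fun x => lab (g x))) in
  weight (fun x => lab (g x)).

Definition join_rel (T1 T2 : finType) (e1 : rel T1) (e2 : rel T2) : rel (T1 + T2) :=
  fun a b => match a, b with
             | inl x, inl y => e1 x y
             | inr x, inr y => e2 x y
             | _, _ => true
             end.

(* Main.v *)
Require Import Defs.
From mathcomp Require Import all_boot all_order all_algebra.
Import Order.TTheory GRing.Theory Num.Theory.
Local Open Scope ring_scope.

Lemma const1_srdf (T : finType) (e : rel T) :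
  is_srdf e (fun x => lab ([ffun=> (@Ordinal 3 1 isT)] x)).
Proof.
apply/and3P; split.
- by apply/forallP => x; rewrite ffunE.
- apply/forallP => x.
  under eq_bigr => y _ do rewrite ffunE /lab /=.
  rewrite sumr_const.
  have : (0 < #|cnbhd e x|)%N.
    by apply/card_gt0P; exists x; rewrite inE eqxx.
  case: #|_| => // n _; by rewrite -mulr_natr mul1r ler1n.
- by apply/forallP => x; rewrite ffunE.
Qed.

Lemma gammaSR_spec (T : finType) (e : rel T) :
  exists g : {ffun T -> 'I_3}, is_srdf e (fun x => lab (g x)) /\
    gammaSR e = weight (fun x => lab (g x)).
Proof.
rewrite /gammaSR.
case: arg_minP; first exact: const1_srdf.
by move=> g Pg _; exists g.
Qed.

Lemma gammaSR_min (T : finType) (e : rel T) (g : {ffun T -> 'I_3}) :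
  is_srdf e (fun x => lab (g x)) -> gammaSR e <= weight (fun x => lab (g x)).
Proof.
move=> Pg; rewrite /gammaSR.
case: arg_minP; first exact: const1_srdf.
by move=> g0 _ H; apply: H.
Qed.

Theorem mainTheorem3 (T1 T2 : finType) (e1 : rel T1) (e2 : rel T2) :
  simple_graph e1 -> simple_graph e2 ->
  0 <= gammaSR e1 -> 0 <= gammaSR e2 ->
  gammaSR (join_rel e1 e2) <= gammaSR e1 + gammaSR e2.
Proof.
move=> _ _ G1 G2.
have [g1 [S1 E1]] := gammaSR_spec _ e1.
have [g2 [S2 E2]] := gammaSR_spec _ e2.
pose h : {ffun T1 + T2 -> 'I_3} :=
  [ffun a => match a with inl x => g1 x | inr y => g2 y end].
have Wh : weight (fun x => lab (h x)) = gammaSR e1 + gammaSR e2.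
  rewrite /weight big_sumType E1 E2 /weight.
  by congr (_ + _); apply: eq_bigr => i _; rewrite ffunE.
rewrite -Wh; apply: gammaSR_min.
move/and3P: S1 => [/forallP V1 /forallP N1 /forallP D1].
move/and3P: S2 => [/forallP V2 /forallP N2 /forallP D2].
apply/and3P; split.
- by apply/forallP => -[x|x]; rewrite ffunE.
- apply/forallP => a.
  rewrite big_mkcond big_sumType /=.
  case: a => [x|x].
  + have -> : \sum_i (if inr i \in cnbhd (join_rel e1 e2) (inl x) then lab (h (inr i)) else 0)
              = gammaSR e2.
      by rewrite E2 /weight; apply: eq_bigr => i _; rewrite inE /= ffunE.
    have -> : \sum_i (if inl i \in cnbhd (join_rel e1 e2) (inl x) then lab (h (inl i)) else 0)
              = \sum_(y in cnbhd e1 x) lab (g1 y).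
      by rewrite [RHS]big_mkcond; apply: eq_bigr => i _; rewrite !inE /= ffunE.
    by rewrite -[1]addr0 lerD.
  + have -> : \sum_i (if inl i \in cnbhd (join_rel e1 e2) (inr x) then lab (h (inl i)) else 0)
              = gammaSR e1.
      by rewrite E1 /weight; apply: eq_bigr => i _; rewrite inE /= ffunE.
    have -> : \sum_i (if inr i \in cnbhd (join_rel e1 e2) (inr x) then lab (h (inr i)) else 0)
              = \sum_(y in cnbhd e2 x) lab (g2 y).
      by rewrite [RHS]big_mkcond; apply: eq_bigr => i _; rewrite !inE /= ffunE.
    by rewrite -[1]add0r lerD.
- apply/forallP => -[x|x]; apply/implyP; rewrite ffunE => Hx.
  + have /existsP [y /andP [Ey Fy]] := implyP (D1 x) Hx.
    by apply/existsP; exists (inl y); rewrite /= ffunE Ey.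
  + have /existsP [y /andP [Ey Fy]] := implyP (D2 x) Hx.
    by apply/existsP; exists (inr y); rewrite /= ffunE Ey.
Qed.
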